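(* Let $F$ be a directed graph on a finite vertex set whose underlying undirected graph is simple, in which every node has out-degree at most $1$ (a directed pseudo-forest), and in which no pair of nodes is joined by edges in both directions. Let $w$ be positive edge weights and let $\chi:V(F)\to\{1,2,3\}$ be a proper coloring of the underlying undirected graph. Mark edges as follows: each node $x$ with $\chi(x)=1$ marks its outgoing edge (if it has one) when the weight of that edge is at least the sum of weights of all its incoming edges, and otherwise marks all its incoming edges; each node $x$ with $\chi(x)=2$ marks its outgoing edge if the head of that edge has color $3$ and its weight is at least the sum of the weights of the incoming edges of $x$ whose tails have color $3$, and otherwise marks all incoming edges of $x$ whose tails have color $3$; nodes of color $3$ mark nothing. Then the set of marked edges contains no cycle (its underlying undirected graph is a forest). *)

(* Defs.v *)
From HB Require Import structures.
From mathcomp Require Import all_boot all_order all_algebra.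
Set Implicit Arguments. Unset Strict Implicit. Unset Printing Implicit Defensive.
Import Order.TTheory GRing.Theory Num.Theory.
Local Open Scope ring_scope.

(* A directed graph on a finite vertex set T is an edge relation e : rel T
   (e x y means there is a directed edge x -> y).  Edge weights are given by
   w : T -> T -> R (only their values on edges matter).  Colours are
   natural numbers, chi : T -> nat, with values in {1,2,3}. *)

Section Marking.
Variables (T : finType) (R : realFieldType) (e : rel T) (w : T -> T -> R)
          (chi : T -> nat).

Definition in_weight (x : T) : R := \sum_(u | e u x) w u x.

Definition in_weight3 (x : T) : R := \sum_(u | e u x && (chi u == 3%N)) w u x.

Definition marks_out1 (x : T) : bool :=
  [exists y, e x y && (in_weight x <= w x y)].

Definition marks_out2 (x : T) : bool :=
  [exists y, [&& e x y, chi y == 3%N & in_weight3 x <= w x y]].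

Definition marks (x u v : T) : bool :=
  e u v &&
  (if chi x == 1%N then
     (if marks_out1 x then u == x else v == x)
   else if chi x == 2%N then
     (if marks_out2 x then u == x else (v == x) && (chi u == 3%N))
   else false).

Definition marked (u v : T) : bool := [exists x, marks x u v].

Definition marked_und (u v : T) : bool := marked u v || marked v u.

End Marking.

Definition is_forest (T : finType) (g : rel T) : Prop :=
  forall p : seq T, (3 <= size p)%N -> uniq p -> ~~ cycle g p.

(* Main.v *)
Require Import Defs.
From HB Require Import structures.
From mathcomp Require Import all_boot all_order all_algebra.
From mathcomp Require Import zify.
Import Order.TTheory GRing.Theory Num.Theory.
Local Open Scope ring_scope.

Section Proof15.
Variables (T : finType) (R : realFieldType) (e : rel T)
    (w : T -> T -> R) (chi : T -> nat).
Hypotheses (e_irr : forall x, ~~ e x x)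
    (e_anti : forall x y, e x y -> ~~ e y x)
    (e_outdeg : forall x y z, e x y -> e x z -> y = z)
    (chi_range : forall x, (1 <= chi x <= 3)%N)
    (chi_proper : forall x y, e x y -> chi x != chi y).

Let mk := marks e w chi.
Let mkd := marked e w chi.

Lemma marks_e {x u v} : mk x u v -> e u v.
Proof. by case/andP. Qed.

Lemma marks_who {x u v} : mk x u v -> (x == u) || (x == v).
Proof.
rewrite /mk /marks => /andP[_].
case: ifP => _; first by case: ifP => _ /eqP ->; rewrite eqxx ?orbT.
case: ifP => _ //; case: ifP => _; first by move/eqP->; rewrite eqxx.
by case/andP => /eqP ->; rewrite eqxx orbT.
Qed.

Lemma marked_e {u v} : mkd u v -> e u v.
Proof. by case/existsP => x /marks_e. Qed.

Lemma marked_split {u v} : mkd u v -> mk u u v \/ mk v u v.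
Proof.
case/existsP => x Hx; case/orP: (marks_who Hx) => /eqP E; subst x; auto.
Qed.

Lemma tailM_chi {u v} : e u v -> mk u u v ->
  (chi u != 3)%N /\ ((chi u == 2)%N -> (chi v == 3)%N).
Proof.
move=> euv; rewrite /mk /marks euv /=.
have uv : (u == v) = false by apply: contraNF (e_irr u) => /eqP E; rewrite {2}E.
case: ifP => c1; first by rewrite (eqP c1).
case: ifP => c2 //; case: ifP => m2; last by rewrite eq_sym uv.
move=> _.
split; first by rewrite (eqP c2).
move=> _; case/existsP: m2 => y /and3P[euy cy _].
by rewrite (e_outdeg _ _ _ euv euy).
Qed.

Lemma headM_chi {u v} : e u v -> mk v u v ->
  (chi v != 3)%N /\ ((chi v == 2)%N -> (chi u == 3)%N).
Proof.
move=> euv; rewrite /mk /marks euv /=.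
have uv : (u == v) = false by apply: contraNF (e_irr u) => /eqP E; rewrite {2}E.
case: ifP => c1; first by rewrite (eqP c1).
case: ifP => c2 //; case: ifP => m2; first by rewrite uv.
by case/andP => _ c3; split; rewrite ?(eqP c2).
Qed.

Lemma head_not_tail {u v z} : e u v -> e v z -> mk v u v -> ~~ mk v v z.
Proof.
move=> euv evz; rewrite /mk /marks euv evz /=.
have uv : (u == v) = false by apply: contraNF (e_irr u) => /eqP E; rewrite {2}E.
have zv : (z == v) = false by apply: contraNF (e_irr v) => /eqP E; rewrite -{2}E.
case: ifP => c1; first by case: ifP => m; rewrite ?uv ?zv.
case: ifP => c2 //; case: ifP => m; by rewrite ?uv ?zv.
Qed.

Definition EE u v := e u v && mkd u v.

Lemma head_prop {u v z} : EE u v -> EE v z -> mk v u v -> mk z v z.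
Proof.
move=> /andP[euv _] /andP[evz mvz] h.
case: (marked_split mvz) => // t.
by move: (head_not_tail euv evz h); rewrite t.
Qed.

Lemma window y0 y1 y2 y3 y4 y5 :
  EE y0 y1 -> EE y1 y2 -> EE y2 y3 -> EE y3 y4 -> EE y4 y5 -> False.
Proof.
move=> E01 E12 E23 E34 E45.
have r := chi_range.
case: (boolP (mk y3 y2 y3)) => h23.
  have h34 := head_prop E23 E34 h23.
  have h45 := head_prop E34 E45 h34.
  move: (headM_chi (proj1 (andP E23)) h23) (headM_chi (proj1 (andP E34)) h34)
        (headM_chi (proj1 (andP E45)) h45) (chi_proper _ _ (proj1 (andP E45)))
        (r y3) (r y4) (r y5).
  move=> [a1 a2] [b1 b2] [c1 c2] d; lia.
have h12 : ~~ mk y2 y1 y2 by apply: contra h23 => h; apply: head_prop E12 E23 h.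
have h01 : ~~ mk y1 y0 y1 by apply: contra h12 => h; apply: head_prop E01 E12 h.
have t01 : mk y0 y0 y1 by case: (marked_split (proj2 (andP E01))) => //; rewrite (negbTE h01).
have t12 : mk y1 y1 y2 by case: (marked_split (proj2 (andP E12))) => //; rewrite (negbTE h12).
have t23 : mk y2 y2 y3 by case: (marked_split (proj2 (andP E23))) => //; rewrite (negbTE h23).
move: (tailM_chi (proj1 (andP E01)) t01) (tailM_chi (proj1 (andP E12)) t12)
      (tailM_chi (proj1 (andP E23)) t23) (chi_proper _ _ (proj1 (andP E01)))
      (r y0) (r y1) (r y2).
move=> [a1 a2] [b1 b2] [c1 c2] d; lia.
Qed.


Lemma nn_neq (p : seq T) x : uniq p -> (3 <= size p)%N -> x \in p ->
  next p (next p x) != x.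
Proof.
move=> up sp /rot_to [i q Hr].
rewrite -!(next_rot i up) Hr.
have uq : uniq (x :: q) by rewrite -Hr rot_uniq.
have sq : (3 <= size (x :: q))%N by rewrite -Hr size_rot.
case: q uq sq Hr => [|b [|c r]] // uq _ _.
move: uq; rewrite /= !inE => /andP[/norP[xb /norP[xc _]] /andP[/norP[bc _] _]].
rewrite eqxx (eq_sym b x) (negbTE xb) eqxx eq_sym; exact: xc.
Qed.

Lemma R_EE {u v} : marked_und e w chi u v -> EE u v \/ EE v u.
Proof.
rewrite /marked_und => /orP[h|h]; [left|right]; apply/andP; split => //;
exact: marked_e h.
Qed.

End Proof15.

Theorem mainTheorem15 (T : finType) (R : realFieldType) (e : rel T)
    (w : T -> T -> R) (chi : T -> nat)
    (e_irr : forall x, ~~ e x x)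
    (e_anti : forall x y, e x y -> ~~ e y x)
    (e_outdeg : forall x y z, e x y -> e x z -> y = z)
    (w_pos : forall x y, e x y -> 0 < w x y)
    (chi_range : forall x, (1 <= chi x <= 3)%N)
    (chi_proper : forall x y, e x y -> chi x != chi y) :
  is_forest (marked_und e w chi).
Proof.
move=> p sp up; apply/negP => cp.
have Rn x : x \in p -> marked_und e w chi x (next p x) by move=> xp; apply: next_cycle cp xp.
have mn x n : x \in p -> iter n (next p) x \in p.
  by move=> xp; elim: n => //= n IH; rewrite mem_next.
have win := @window T R e w chi e_irr e_outdeg chi_range chi_proper.
pose E := @EE T R e w chi.
case: p sp up cp Rn mn => [//|x0 p'] sp up cp Rn mn.
set p := x0 :: p' in sp up cp Rn mn *.
have x0p : x0 \in p by rewrite inE eqxx.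
case: (boolP (all (fun x => E x (next p x)) p)) => [/allP A | /allPn [x xp nE]].
  pose b n := iter n (next p) x0.
  have Eb n : E (b n) (b n.+1) by apply: A; apply: mn.
  exact: (win (b 0) (b 1) (b 2) (b 3) (b 4) (b 5) (Eb 0) (Eb 1) (Eb 2) (Eb 3) (Eb 4)).
pose b n := iter n (next p) x.
have Eb n : E (b n.+1) (b n).
  elim: n => [|n IH].
    by case: (@R_EE T R e w chi _ _ (Rn _ xp)) => h; [by move: nE; rewrite /E h | exact: h].
  have bp : b n \in p by apply: mn.
  have bp' : b n.+1 \in p by apply: mn.
  case: (@R_EE T R e w chi _ _ (Rn _ bp')) => // h.
  exfalso; move: (@nn_neq T _ _ up sp bp).
  move: IH h; rewrite /EE /= => /andP[h1 _] /andP[h2 _].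
  by rewrite -(e_outdeg _ _ _ h1 h2) eqxx.
exact: (win (b 5) (b 4) (b 3) (b 2) (b 1) (b 0) (Eb 4) (Eb 3) (Eb 2) (Eb 1) (Eb 0)).
Qed.
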